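(* Let $\omega$ be a primitive third root of unity, $S=\mathbb{C}\langle x,y,z\rangle/(x^2,y^2,z^2)$, and for $t\in\mathbb{C}^*$ let $T_t$ be the quotient of $S$ by the two-sided ideal generated by $(zxy+\omega xyz+\omega^2 yzx)+t(yxz+\omega zyx+\omega^2 xzy)$ and $(zxy+\omega^2 xyz+\omega yzx)+t(yxz+\omega^2 zyx+\omega xzy)$; let $M_t=T_t/(g_t)$ with $g_t=(zxy+xyz+yzx)+t(yxz+zyx+xzy)$. If $-t$ is a primitive $n$th root of unity, then the PI-degree of $M_t$ is $2n$.
   Context: For an algebra finite over its center, the PI-degree is the maximal dimension of its simple (finite-dimensional) representations. *)

(* Defs.v *)
From HB Require Import structures.
From mathcomp Require Import all_boot all_order all_algebra all_field.
From mathcomp Require Import reals.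
From mathcomp Require Import complex.
Set Implicit Arguments. Unset Strict Implicit. Unset Printing Implicit Defensive.
Import GRing.Theory Num.Theory.
Local Open Scope ring_scope.
Local Open Scope complex_scope.

(* A d-dimensional representation of
   M_t = C<x,y,z>/(x^2,y^2,z^2, r1_t, r2_t, g_t)
   is an algebra morphism M_t -> 'M_d, i.e. a triple of d x d matrices
   (images of x, y, z, acting on column vectors) satisfying the defining
   relations. *)
Section Rep.
Variables (R : realType) (d : nat) (w t : R[i]) (X Y Z : 'M[R[i]]_d).

Let m3 (A B C : 'M[R[i]]_d) := A *m B *m C.

Definition rel1 : 'M[R[i]]_d :=
  (m3 Z X Y + w *: m3 X Y Z + (w ^+ 2) *: m3 Y Z X)
  + t *: (m3 Y X Z + w *: m3 Z Y X + (w ^+ 2) *: m3 X Z Y).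

Definition rel2 : 'M[R[i]]_d :=
  (m3 Z X Y + (w ^+ 2) *: m3 X Y Z + w *: m3 Y Z X)
  + t *: (m3 Y X Z + (w ^+ 2) *: m3 Z Y X + w *: m3 X Z Y).

Definition relg : 'M[R[i]]_d :=
  (m3 Z X Y + m3 X Y Z + m3 Y Z X) + t *: (m3 Y X Z + m3 Z Y X + m3 X Z Y).

Definition is_rep_Mt : Prop :=
  [/\ X *m X = 0, Y *m Y = 0, Z *m Z = 0 & [/\ rel1 = 0, rel2 = 0 & relg = 0]].

Definition col_invariant (A U : 'M[R[i]]_d) : Prop :=
  exists B : 'M[R[i]]_d, A *m U = U *m B.

Definition simple_rep : Prop :=
  (0 < d)%N /\
  forall U : 'M[R[i]]_d,
    col_invariant X U -> col_invariant Y U -> col_invariant Z U ->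
    \rank U = 0%N \/ \rank U = d.
End Rep.

(* m is the PI-degree of M_t: the maximal dimension of a simple
   finite-dimensional representation of M_t is m. *)
Definition PI_degree_Mt (R : realType) (w t : R[i]) (m : nat) : Prop :=
  (exists X Y Z : 'M[R[i]]_m, is_rep_Mt w t X Y Z /\ simple_rep X Y Z) /\
  (forall (d : nat) (X Y Z : 'M[R[i]]_d),
      is_rep_Mt w t X Y Z -> simple_rep X Y Z -> (d <= m)%N).

(* Main.v *)
Require Import Defs.
From HB Require Import structures.
From mathcomp Require Import all_boot all_order all_algebra all_field.
From mathcomp Require Import reals.
From mathcomp Require Import complex.
From mathcomp Require Import spectral.
From mathcomp Require Import ring zify.
From Stdlib Require Import Classical.
Set Implicit Arguments. Unset Strict Implicit. Unset Printing Implicit Defensive.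
Import GRing.Theory Num.Theory.
Local Open Scope ring_scope.

Section Gen.
Variable C : numClosedFieldType.

Fixpoint mpow d (A : 'M[C]_d) k : 'M[C]_d :=
  match k with 0 => 1%:M | k'.+1 => mpow A k' *m A end.

Lemma eig_sub d (K A B : 'M[C]_d) : K != 0 -> stablemx K A -> stablemx K B ->
  A *m B = B *m A ->
  exists2 v : 'rV_d, v != 0 & [&& (v <= K)%MS, stablemx v A & stablemx v B].
Proof.
move=> K0 KA KB AB.
have r0 : (0 < \rank K)%N by rewrite lt0n mxrank_eq0.
have [|w w0 /andP[wA wB]] := @common_eigenvector2 C _ (restrictmx K A) (restrictmx K B) r0.
  by rewrite -!conjmxM ?inE ?stablemx_row_base // AB.
exists (w *m row_base K); first by rewrite mulmx_free_eq0 ?row_base_free.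
rewrite -!stablemx_restrict // wA wB andbT.
by rewrite (submx_trans (submxMl _ _)) // eq_row_base.
Qed.

Definition RowRel d (p : C) (x y z : 'M[C]_d) :=
  [/\ x *m x = 0, y *m y = 0, z *m z = 0 &
   [/\ y *m x *m z = p *: (z *m x *m y), z *m y *m x = p *: (x *m y *m z)
     & x *m z *m y = p *: (y *m z *m x)]].

Definition rowsimple d (x y z : 'M[C]_d) :=
  forall m (W : 'M[C]_(m, d)), stablemx W x -> stablemx W y -> stablemx W z ->
    \rank W = 0%N \/ \rank W = d.

Lemma RowRel_rot d p (x y z : 'M[C]_d) : RowRel p x y z -> RowRel p y z x.
Proof. by case=> h1 h2 h3 [h4 h5 h6]; split. Qed.

Lemma rowsimple_rot d (x y z : 'M[C]_d) : rowsimple x y z -> rowsimple y z x.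
Proof. by move=> H m W a b c; apply: H. Qed.

End Gen.


Section C1.
Variables (C : numClosedFieldType) (n d : nat) (p : C) (x y z : 'M[C]_d).
Hypothesis hR : RowRel p x y z.
Hypothesis hp : p ^+ n = 1.
Hypothesis hn : (0 < n)%N.
Hypothesis p0 : p != 0.

Lemma kill_x m (M : 'M[C]_(m, d)) k : M *m x = 0 -> M *m mpow (y *m z) k *m x = 0.
Proof.
case: hR => _ _ _ [_ _ h6] Mx.
elim: k => [|k IH] /=; first by rewrite mulmx1.
suff H : p *: (M *m (mpow (y *m z) k *m (y *m z)) *m x) = 0.
  by move/eqP: H; rewrite scaler_eq0 (negbTE p0) => /eqP.
have -> : M *m (mpow (y *m z) k *m (y *m z)) *m x = (M *m mpow (y *m z) k) *m (y *m z *m x).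
  by rewrite !mulmxA.
by rewrite scalemxAr -h6 !mulmxA IH !mul0mx.
Qed.

Lemma yzyx : (y *m z) *m (y *m x) = p *: ((y *m x) *m (y *m z)).
Proof.
case: hR => _ _ _ [_ h5 _].
have -> : (y *m z) *m (y *m x) = y *m (z *m y *m x) by rewrite !mulmxA.
by rewrite h5 -scalemxAr !mulmxA.
Qed.

Lemma comm_pow k : mpow (y *m z) k *m (y *m x) = p ^+ k *: ((y *m x) *m mpow (y *m z) k).
Proof.
elim: k => [|k IH] /=; first by rewrite mul1mx mulmx1 expr0 scale1r.
rewrite -mulmxA yzyx -scalemxAr [in LHS](mulmxA (mpow _ k)) IH -scalemxAl scalerA -mulmxA exprS mulrC.
by [].
Qed.

Lemma C1 (hs : rowsimple x y z) (v0 : 'rV[C]_d) :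
  v0 != 0 -> v0 *m x = 0 -> v0 *m z = 0 -> (d <= n + n)%N.
Proof.
move=> v00 v0x v0z.
have hR' := hR; case: hR' => hxx hyy hzz [h4 h5 h6].
set K := (kermx x :&: kermx z)%MS.
have Kx : K *m x = 0 by apply/sub_kermxP; exact: capmxSl.
have Kz : K *m z = 0 by apply/sub_kermxP; exact: capmxSr.
have K0 : K != 0.
  apply/rowV0Pn; exists v0 => //.
  by rewrite sub_capmx; apply/andP; split; apply/sub_kermxP.
have KA : stablemx K (y *m x).
  rewrite sub_capmx; apply/andP; split; apply/sub_kermxP.
    by rewrite !mulmxA -(mulmxA _ x x) hxx mulmx0.
  have -> : K *m (y *m x) *m z = K *m (y *m x *m z) by rewrite !mulmxA.
  by rewrite h4 -scalemxAr !mulmxA Kz !mul0mx scaler0.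
have KB : stablemx K (mpow (y *m z) n).
  rewrite sub_capmx; apply/andP; split; apply/sub_kermxP; first exact: kill_x.
  case: (n) hn => // n' _ /=.
  by rewrite -!mulmxA hzz !mulmx0.
have AB : (y *m x) *m mpow (y *m z) n = mpow (y *m z) n *m (y *m x).
  by rewrite comm_pow hp scale1r.
have [v v0' /and3P [vK vA vB]] := eig_sub K0 KA KB AB.
have vx : v *m x = 0 by apply/sub_kermxP; exact: submx_trans vK (capmxSl _ _).
have vz : v *m z = 0 by apply/sub_kermxP; exact: submx_trans vK (capmxSr _ _).
have [mu hmu] := sub_rVP vA.
have [nu hnu] := sub_rVP vB.
pose u k := v *m mpow (y *m z) k.
pose U1 := \matrix_(k < n) u k.
pose U2 := \matrix_(k < n) (u k *m y).
pose W := (U1 + U2)%MS.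
have u_in k : (k < n)%N -> (u k <= W)%MS.
  move=> hk; have -> : u k = row (Ordinal hk) U1 by rewrite rowK.
  exact: submx_trans (row_sub _ _) (addsmxSl _ _).
have u'_in k : (k < n)%N -> (u k *m y <= W)%MS.
  move=> hk; have -> : u k *m y = row (Ordinal hk) U2 by rewrite rowK.
  exact: submx_trans (row_sub _ _) (addsmxSr _ _).
have stab M : (forall k, (k < n)%N -> (u k *m M <= W)%MS /\ (u k *m y *m M <= W)%MS) ->
    stablemx W M.
  move=> H; rewrite addsmxMr addsmx_sub; apply/andP; split; apply/row_subP => k;
  by rewrite row_mul rowK; have [] := H _ (ltn_ord k).
have u0 : u 0%N = v by rewrite /u /= mulmx1.
have Wx : stablemx W x.
  apply: stab => k hk; split.
    by rewrite /u kill_x ?sub0mx.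
  rewrite /u -mulmxA -(mulmxA v) comm_pow -scalemxAr mulmxA hmu -scalemxAl.
  by rewrite scalerA scalemx_sub // u_in.
have Wy : stablemx W y.
  apply: stab => k hk; split; first exact: u'_in.
  by rewrite -mulmxA hyy mulmx0 sub0mx.
have Wz : stablemx W z.
  apply: stab => k hk; split.
    case: k hk => [|k] hk; first by rewrite u0 vz sub0mx.
    by rewrite /u /= -!mulmxA hzz !mulmx0 sub0mx.
  have -> : u k *m y *m z = u k.+1 by rewrite /u /= !mulmxA.
  case: (ltnP k.+1 n) => hk1; first exact: u_in.
  have -> : k.+1 = n by apply/eqP; rewrite eqn_leq hk1 hk.
  by rewrite /u hnu -u0 scalemx_sub // u_in.
case: (hs _ W Wx Wy Wz) => hW.
  exfalso; move/eqP: hW; rewrite mxrank_eq0 => /eqP W0.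
  by move: (u_in 0%N hn); rewrite W0 u0 submx0 (negbTE v0').
rewrite -hW; apply: leq_trans (mxrank_adds_leqif U1 U2).1 _.
by apply: leq_add; apply: rank_leq_row.
Qed.

End C1.


Lemma upper_row (C : numClosedFieldType) (n d : nat) (p : C) (x y z : 'M[C]_d) :
  RowRel p x y z -> rowsimple x y z -> p ^+ n = 1 -> (0 < n)%N -> p != 0 ->
  (0 < d)%N -> (d <= n + n)%N.
Proof.
move=> hR hs hp hn p0 hd.
have hR2 := RowRel_rot hR; have hR3 := RowRel_rot hR2.
have hs2 := rowsimple_rot hs; have hs3 := rowsimple_rot hs2.
case: (classic (exists v : 'rV[C]_d, [/\ v != 0, v *m x = 0 & v *m z = 0])).
  by case=> v [v0 vx vz]; exact: (C1 hR hp hn p0 hs v0 vx vz).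
move=> N1.
case: (classic (exists v : 'rV[C]_d, [/\ v != 0, v *m y = 0 & v *m x = 0])).
  by case=> v [v0 vx vz]; exact: (C1 hR2 hp hn p0 hs2 v0 vx vz).
move=> N2.
case: (classic (exists v : 'rV[C]_d, [/\ v != 0, v *m z = 0 & v *m y = 0])).
  by case=> v [v0 vx vz]; exact: (C1 hR3 hp hn p0 hs3 v0 vx vz).
move=> N3.
have H1 (v : 'rV[C]_d) : v *m x = 0 -> v *m z = 0 -> v = 0.
  move=> a b; apply/eqP; apply/negPn/negP => c; apply: N1; by exists v.
have H2 (v : 'rV[C]_d) : v *m y = 0 -> v *m x = 0 -> v = 0.
  move=> a b; apply/eqP; apply/negPn/negP => c; apply: N2; by exists v.
have H3 (v : 'rV[C]_d) : v *m z = 0 -> v *m y = 0 -> v = 0.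
  move=> a b; apply/eqP; apply/negPn/negP => c; apply: N3; by exists v.
case: hR => hxx hyy hzz [h4 h5 h6].
have Ay (a : 'rV[C]_d) : a *m y = 0.
  have e1 : a *m y *m x *m z = 0.
    apply: H3; first by rewrite -mulmxA hzz mulmx0.
    have -> : a *m y *m x *m z *m y = a *m (y *m x *m z) *m y by rewrite !mulmxA.
    by rewrite h4 -scalemxAr -scalemxAl -!mulmxA hyy !mulmx0 scaler0.
  have e2 : a *m y *m x = 0 by apply: H1 => //; rewrite -mulmxA hxx mulmx0.
  by apply: H2 => //; rewrite -mulmxA hyy mulmx0.
pose b : 'rV[C]_d := const_mx 1.
have b0 : b != 0.
  apply/negP => /eqP/rowP/(_ (Ordinal hd)); rewrite !mxE => /eqP.
  by rewrite oner_eq0.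
case: (eqVneq (b *m x) 0) => bx.
  by move: b0; rewrite (H2 b (Ay b) bx) eqxx.
by move: bx; rewrite (H2 (b *m x) (Ay _)) ?eqxx // -mulmxA hxx mulmx0.
Qed.


Lemma prim3 (F : fieldType) (w : F) : 3.-primitive_root w ->
  w ^+ 3 = 1 /\ 1 + w + w ^+ 2 = 0.
Proof.
move=> hw; have w3 := prim_expr_order hw.
split => //.
have w1 : w - 1 != 0.
  rewrite subr_eq0; apply/negP => /eqP w1.
  by move: (prim_order_dvd hw 1); rewrite expr1 w1 eqxx.
have : (w - 1) * (1 + w + w ^+ 2) = 0.
  have -> : (w - 1) * (1 + w + w ^+ 2) = w ^+ 3 - 1 by ring.
  by rewrite w3 subrr.
by move/eqP; rewrite mulf_eq0 (negbTE w1) /= => /eqP.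
Qed.

Lemma scal3 (F : fieldType) (w t a1 a2 b1 b2 c1 c2 : F) :
  w ^+ 3 = 1 -> 1 + w + w ^+ 2 = 0 -> (3 : F) != 0 ->
  (a1 + w * b1 + w ^+ 2 * c1) + t * (a2 + w * b2 + w ^+ 2 * c2) = 0 ->
  (a1 + w ^+ 2 * b1 + w * c1) + t * (a2 + w ^+ 2 * b2 + w * c2) = 0 ->
  (a1 + b1 + c1) + t * (a2 + b2 + c2) = 0 ->
  [/\ a1 = - t * a2, b1 = - t * b2 & c1 = - t * c2].
Proof.
move=> w3 w2 h3 r1 r2 rg.
have eA : 3 * (a1 + t * a2) = 0.
  have -> : 3 * (a1 + t * a2) =
    ((a1 + w * b1 + w ^+ 2 * c1) + t * (a2 + w * b2 + w ^+ 2 * c2))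
    + ((a1 + w ^+ 2 * b1 + w * c1) + t * (a2 + w ^+ 2 * b2 + w * c2))
    + ((a1 + b1 + c1) + t * (a2 + b2 + c2))
    - (1 + w + w ^+ 2) * (b1 + t * b2 + c1 + t * c2) by ring.
  by rewrite r1 r2 rg w2; ring.
have eB : 3 * (b1 + t * b2) = 0.
  have -> : 3 * (b1 + t * b2) =
    w ^+ 2 * ((a1 + w * b1 + w ^+ 2 * c1) + t * (a2 + w * b2 + w ^+ 2 * c2))
    + w * ((a1 + w ^+ 2 * b1 + w * c1) + t * (a2 + w ^+ 2 * b2 + w * c2))
    + ((a1 + b1 + c1) + t * (a2 + b2 + c2))
    - (1 + w + w ^+ 2) * (a1 + t * a2 + c1 + t * c2)
    - (w ^+ 3 - 1) * (2 * (b1 + t * b2) + w * (c1 + t * c2)) by ring.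
  by rewrite r1 r2 rg w2 w3; ring.
have eC : 3 * (c1 + t * c2) = 0.
  have -> : 3 * (c1 + t * c2) =
    w * ((a1 + w * b1 + w ^+ 2 * c1) + t * (a2 + w * b2 + w ^+ 2 * c2))
    + w ^+ 2 * ((a1 + w ^+ 2 * b1 + w * c1) + t * (a2 + w ^+ 2 * b2 + w * c2))
    + ((a1 + b1 + c1) + t * (a2 + b2 + c2))
    - (1 + w + w ^+ 2) * (a1 + t * a2 + b1 + t * b2)
    - (w ^+ 3 - 1) * (w * (b1 + t * b2) + 2 * (c1 + t * c2)) by ring.
  by rewrite r1 r2 rg w2 w3; ring.
move: eA eB eC => /eqP eA /eqP eB /eqP eC.
move: eA eB eC; rewrite !mulf_eq0 (negbTE h3) /= => /eqP eA /eqP eB /eqP eC.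
split; apply/eqP; rewrite -subr_eq0 mulNr opprK ?eA ?eB ?eC //.
Qed.

Lemma trmxZ' (F : fieldType) m n (c : F) (A : 'M[F]_(m, n)) : (c *: A)^T = c *: A^T.
Proof. by apply/matrixP => i j; rewrite !mxE. Qed.

Lemma tr3 (F : fieldType) d (A B D : 'M[F]_d) : (A *m B *m D)^T = D^T *m B^T *m A^T.
Proof. by rewrite !trmx_mul mulmxA. Qed.

Section Conv.
Variable R : realType.
Local Notation C := (R[i]).

Lemma rep_to_row d (w t : C) (X Y Z : 'M[C]_d) :
  3.-primitive_root w -> is_rep_Mt w t X Y Z -> RowRel (- t) X^T Y^T Z^T.
Proof.
move=> hw [hx hy hz [r1 r2 rg]]; have [w3 w2] := prim3 hw.
have h3 : (3 : C) != 0 by rewrite pnatr_eq0.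
move: r1 r2 rg; rewrite /rel1 /rel2 /relg.
have E : forall a1 a2 b1 b2 c1 c2 : 'M[C]_d,
  (a1 + w *: b1 + w ^+ 2 *: c1) + t *: (a2 + w *: b2 + w ^+ 2 *: c2) = 0 ->
  (a1 + w ^+ 2 *: b1 + w *: c1) + t *: (a2 + w ^+ 2 *: b2 + w *: c2) = 0 ->
  (a1 + b1 + c1) + t *: (a2 + b2 + c2) = 0 ->
  [/\ a1 = - t *: a2, b1 = - t *: b2 & c1 = - t *: c2].
  move=> a1 a2 b1 b2 c1 c2 r1 r2 rg.
  have F i j : [/\ a1 i j = - t * a2 i j, b1 i j = - t * b2 i j & c1 i j = - t * c2 i j].
    apply: scal3 w3 w2 h3 _ _ _.
    - by move/matrixP: r1 => /(_ i j); rewrite !mxE.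
    - by move/matrixP: r2 => /(_ i j); rewrite !mxE.
    - by move/matrixP: rg => /(_ i j); rewrite !mxE.
  by split; apply/matrixP => i j; rewrite mxE; case: (F i j).
move=> r1 r2 rg; case: (E _ _ _ _ _ _ r1 r2 rg) => e1 e2 e3.
split; rewrite -?trmx_mul ?hx ?hy ?hz ?trmx0 //.
split.
- by rewrite !mulmxA e1 trmxZ'.
- by rewrite !mulmxA e2 trmxZ'.
- by rewrite !mulmxA e3 trmxZ'.
Qed.

Lemma row_to_rep d (w p : C) (x y z : 'M[C]_d) :
  3.-primitive_root w -> RowRel p x y z -> is_rep_Mt w (- p) x^T y^T z^T.
Proof.
move=> hw [hx hy hz [h4 h5 h6]].
have e1 : z^T *m x^T *m y^T = p *: (y^T *m x^T *m z^T) by rewrite -!tr3 h4 trmxZ'.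
have e2 : x^T *m y^T *m z^T = p *: (z^T *m y^T *m x^T) by rewrite -!tr3 h5 trmxZ'.
have e3 : y^T *m z^T *m x^T = p *: (x^T *m z^T *m y^T) by rewrite -!tr3 h6 trmxZ'.
split; rewrite -?trmx_mul ?hx ?hy ?hz ?trmx0 //.
split; rewrite /rel1 /rel2 /relg e1 e2 e3;
  apply/matrixP => i j; rewrite !mxE; ring.
Qed.

Lemma simple_to_row d (X Y Z : 'M[C]_d) :
  simple_rep X Y Z -> rowsimple X^T Y^T Z^T.
Proof.
move=> [hd hs] m W Wx Wy Wz.
have G M : stablemx W M^T -> col_invariant M (<<W>>%MS)^T.
  move=> WM.
  have : stablemx <<W>>%MS M^T by rewrite (eqmxMr _ (genmxE W)) !genmxE.
  case/submxP => D hD; exists D^T.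
  by apply: trmx_inj; rewrite !trmx_mul !trmxK hD.
by rewrite -(mxrank_gen W) -mxrank_tr; apply: hs; apply: G.
Qed.

Lemma row_to_simple d (x y z : 'M[C]_d) :
  (0 < d)%N -> rowsimple x y z -> simple_rep x^T y^T z^T.
Proof.
move=> hd hs; split => // U [Bx hx] [By hy] [Bz hz].
have G M B : M^T *m U = U *m B -> stablemx U^T M.
  move=> h; have -> : U^T *m M = B^T *m U^T.
    by apply: trmx_inj; rewrite !trmx_mul !trmxK h.
  exact: submxMl.
by rewrite -mxrank_tr; apply: hs; [apply: G hx | apply: G hy | apply: G hz].
Qed.

End Conv.


Lemma exprmod (F : nzRingType) (q : F) n a : q ^+ n = 1 -> q ^+ (a %% n) = q ^+ a.
Proof. by move=> hq; rewrite {2}(divn_eq a n) exprD mulnC exprM hq expr1n mul1r. Qed.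

Section Cons.
Variables (C : numClosedFieldType) (n : nat) (q : C).
Hypothesis hn : (0 < n)%N.
Hypothesis hq : n.-primitive_root q.
Local Notation N := (2 * n)%N.

Definition u (i : nat) : 'rV[C]_N := \row_(j < N) ((j : nat) == i)%:R.
Definition mk (r : nat -> 'rV[C]_N) : 'M[C]_N := \matrix_(j < N) r j.

Lemma uE (k : 'I_N) : u k = delta_mx 0 k.
Proof. by apply/rowP => j; rewrite !mxE. Qed.

Lemma act r i : (i < N)%N -> u i *m mk r = r i.
Proof. by move=> hi; change (u (Ordinal hi) *m mk r = r (Ordinal hi)); rewrite uE -rowE rowK. Qed.

Lemma ext (A B : 'M[C]_N) : (forall i, (i < N)%N -> u i *m A = u i *m B) -> A = B.
Proof. by move=> H; apply/row_matrixP => k; rewrite !rowE -!uE H. Qed.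

Lemma ltN k : (k < n)%N -> (k < N)%N.
Proof. by move=> hk; rewrite mul2n -addnn ltn_addr. Qed.
Lemma ltNn k : (k < n)%N -> (k + n < N)%N.
Proof. by move=> hk; rewrite mul2n -addnn ltn_add2r. Qed.

Lemma split_idx (P : nat -> Prop) :
  (forall k, (k < n)%N -> P k) -> (forall k, (k < n)%N -> P (k + n)%N) ->
  forall i, (i < N)%N -> P i.
Proof.
move=> H1 H2 i hi; case: (ltnP i n) => h; first exact: H1.
rewrite -(subnK h); apply: H2; rewrite ltn_subLR //.
by rewrite addnn -mul2n.
Qed.

Definition rx i : 'rV[C]_N := if (i < n)%N then 0 else q ^+ (i - n) *: u (i - n).
Definition ry i : 'rV[C]_N := if (i < n)%N then u (i + n) else 0.
Definition rz i : 'rV[C]_N := if (i < n)%N then 0 else u ((i - n).+1 %% n).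
Definition xm := mk rx.
Definition ym := mk ry.
Definition zm := mk rz.

Lemma ux_e k : (k < n)%N -> u k *m xm = 0.
Proof. by move=> hk; rewrite act ?ltN // /rx hk. Qed.
Lemma ux_f k : (k < n)%N -> u (k + n) *m xm = q ^+ k *: u k.
Proof. by move=> hk; rewrite act ?ltNn // /rx ltnNge leq_addl /= addnK. Qed.
Lemma uy_e k : (k < n)%N -> u k *m ym = u (k + n).
Proof. by move=> hk; rewrite act ?ltN // /ry hk. Qed.
Lemma uy_f k : (k < n)%N -> u (k + n) *m ym = 0.
Proof. by move=> hk; rewrite act ?ltNn // /ry ltnNge leq_addl. Qed.
Lemma uz_e k : (k < n)%N -> u k *m zm = 0.
Proof. by move=> hk; rewrite act ?ltN // /rz hk. Qed.
Lemma uz_f k : (k < n)%N -> u (k + n) *m zm = u (k.+1 %% n).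
Proof. by move=> hk; rewrite act ?ltNn // /rz ltnNge leq_addl /= addnK. Qed.

Lemma ltmod a : (a %% n < n)%N.
Proof. exact: ltn_pmod. Qed.

Lemma qn : q ^+ n = 1.
Proof. exact: prim_expr_order hq. Qed.

Lemma RowRel_cons : RowRel q xm ym zm.
Proof.
have e0 (A : 'M[C]_N) i : u i *m (0 : 'M_N) = u i *m A *m 0 by rewrite !mulmx0.
split.
- apply: ext; apply: split_idx => k hk; rewrite mulmx0 mulmxA.
    by rewrite ux_e // mul0mx.
  by rewrite ux_f // -scalemxAl ux_e // scaler0.
- apply: ext; apply: split_idx => k hk; rewrite mulmx0 mulmxA.
    by rewrite uy_e // uy_f.
  by rewrite uy_f // mul0mx.
- apply: ext; apply: split_idx => k hk; rewrite mulmx0 mulmxA.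
    by rewrite uz_e // mul0mx.
  by rewrite uz_f // uz_e // ltmod.
split.
- apply: ext; apply: split_idx => k hk; rewrite -scalemxAr !mulmxA.
    by rewrite uy_e // ux_f // -scalemxAl uz_e // !mul0mx !scaler0.
  by rewrite uy_f // uz_f // ux_e ?ltmod // !mul0mx scaler0.
- apply: ext; apply: split_idx => k hk; rewrite -scalemxAr !mulmxA.
    by rewrite uz_e // ux_e // !mul0mx scaler0.
  rewrite uz_f // uy_e ?ltmod // ux_f ?ltmod // ux_f // -scalemxAl uy_e //.
  by rewrite -scalemxAl uz_f // scalerA exprmod ?qn // exprS.
- apply: ext; apply: split_idx => k hk; rewrite -scalemxAr !mulmxA.
    by rewrite ux_e // uy_e // uz_f // ux_e ?ltmod // !mul0mx scaler0.
  by rewrite ux_f // uy_f // -!scalemxAl uz_e // !mul0mx !scaler0.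
Qed.

Definition Em a b : 'M[C]_N := \matrix_(i, j) (((i : nat) == a) && ((j : nat) == b))%:R.
Definition coord (v : 'rV[C]_N) a := \sum_(j < N) v 0 j * ((j : nat) == a)%:R.

Lemma vE v a b : v *m Em a b = coord v a *: u b.
Proof.
apply/rowP => l; rewrite !mxE big_distrl /=; apply: eq_bigr => j _; rewrite !mxE.
by case: ((j : nat) == a); case: ((l : nat) == b); rewrite /= ?mulr1 ?mulr0.
Qed.

Lemma coord_ord v (j : 'I_N) : coord v j = v 0 j.
Proof.
rewrite /coord (bigD1 j) //= eqxx mulr1 big1 ?addr0 // => i hij.
case: eqP => [hji|]; last by rewrite mulr0.
by move: hij; rewrite (_ : i = j) ?eqxx //; apply: val_inj.
Qed.

Lemma coord_u i a : (i < N)%N -> coord (u i) a = (i == a)%:R.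
Proof.
move=> hi; rewrite /coord (bigD1 (Ordinal hi)) //= !mxE eqxx mul1r big1 ?addr0 // => j hj.
rewrite !mxE; case: eqP => [hji|]; last by rewrite mul0r.
by move: hj; rewrite (_ : j = Ordinal hi) ?eqxx //; apply: val_inj.
Qed.

Lemma mpowS' d (A : 'M[C]_d) j : mpow A j.+1 = A *m mpow A j.
Proof.
elim: j => [|j IH] /=; first by rewrite mul1mx mulmx1.
by rewrite /= in IH *; rewrite [in LHS]IH -mulmxA.
Qed.

Lemma uD_e k j : (k < n)%N -> u k *m mpow (ym *m xm) j = (q ^+ k) ^+ j *: u k.
Proof.
move=> hk; elim: j => [|j IH] /=; first by rewrite mulmx1 expr0 scale1r.
rewrite !mulmxA IH -!scalemxAl uy_e // ux_f // scalerA exprS mulrC.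
by [].
Qed.

Lemma uD_f k j : (k < n)%N -> u (k + n) *m mpow (ym *m xm) j.+1 = 0.
Proof. by move=> hk; rewrite mpowS' !mulmxA uy_f // !mul0mx. Qed.

Definition Pk k := \sum_(j < n) (q ^+ (n - k)) ^+ j.+1 *: mpow (ym *m xm) j.+1.

Lemma tel (r : C) m : (r - 1) * \sum_(j < m) r ^+ j.+1 = r ^+ m.+1 - r.
Proof.
elim: m => [|m IH]; first by rewrite big_ord0 mulr0 expr1 subrr.
by rewrite big_ord_recr /= mulrDr IH !exprS; ring.
Qed.

Lemma geo (r : C) : r ^+ n = 1 -> \sum_(j < n) r ^+ j.+1 = if r == 1 then n%:R else 0.
Proof.
move=> hr; case: eqP => [->|r1].
  by rewrite (eq_bigr (fun=> 1)) => [|j _]; rewrite ?expr1n // sumr_const card_ord.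
have := tel r n; rewrite exprS hr mulr1 subrr => /eqP; rewrite mulf_eq0 subr_eq0.
by case/orP => /eqP.
Qed.

Lemma ndvd k k' : (k < n)%N -> (k' < n)%N -> k' != k -> ~~ (n %| n - k + k')%N.
Proof.
move=> hk hk' ne; case: (ltngtP k' k) => h.
- apply/negP => /dvdn_leq; have h0 : (0 < n - k + k')%N by lia.
  by move=> /(_ h0); lia.
- rewrite (_ : (n - k + k' = n + (k' - k))%N); last by lia.
  rewrite dvdn_addr ?dvdnn //; apply/negP => /dvdn_leq.
  have h0 : (0 < k' - k)%N by lia.
  by move=> /(_ h0); lia.
- by move: ne; rewrite h eqxx.
Qed.

Lemma uP_e k k' : (k < n)%N -> (k' < n)%N ->
  u k' *m Pk k = (if k' == k then n%:R else 0) *: u k'.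
Proof.
move=> hk hk'; rewrite /Pk mulmx_sumr.
under eq_bigr => j _ do rewrite -scalemxAr uD_e // scalerA -exprMn.
rewrite -scaler_suml -exprD geo; last by rewrite -exprM mulnC exprM qn expr1n.
congr (_ *: _); case: (eqVneq k' k) => [->|ne].
  by rewrite subnK ?(ltnW hk) // qn eqxx.
by rewrite -(prim_order_dvd hq) (negbTE (ndvd hk hk' ne)).
Qed.

Lemma uP_f k k' : (k' < n)%N -> u (k' + n) *m Pk k = 0.
Proof.
move=> hk'; rewrite /Pk mulmx_sumr big1 // => j _.
by rewrite -scalemxAr uD_f // scaler0.
Qed.

Lemma Pk_E k : (k < n)%N -> Pk k = n%:R *: Em k k.
Proof.
move=> hk; apply: ext; apply: split_idx => k' hk'.
  rewrite uP_e // -scalemxAr vE coord_u ?ltN //.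
  case: (eqVneq k' k) => [->|ne]; first by rewrite scale1r.
  by rewrite !scale0r scaler0.
rewrite uP_f // -scalemxAr vE coord_u ?ltNn //.
rewrite (_ : (k' + n == k) = false) ?scale0r ?scaler0 //.
by apply/negbTE; rewrite neq_ltn; apply/orP; right; rewrite ltn_addl.
Qed.

Lemma xPk_E k : (k < n)%N -> xm *m Pk k = (q ^+ k * n%:R) *: Em (k + n) k.
Proof.
move=> hk; apply: ext; apply: split_idx => k' hk'.
  rewrite mulmxA ux_e // mul0mx -scalemxAr vE coord_u ?ltN //.
  rewrite (_ : (k' == k + n) = false) ?scale0r ?scaler0 //.
  by apply/negbTE; rewrite neq_ltn; apply/orP; left; rewrite ltn_addl.
rewrite mulmxA ux_f // -scalemxAl uP_e // -scalemxAr vE coord_u ?ltNn // eqn_add2r.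
case: (eqVneq k' k) => [->|ne]; first by rewrite scale1r scalerA.
by rewrite !scale0r !scaler0.
Qed.

Lemma stab_mpow m (W : 'M[C]_(m, N)) M j : stablemx W M -> stablemx W (mpow M j).
Proof.
move=> hM; elim: j => [|j IH] /=; first by rewrite mulmx1 submx_refl.
exact: stablemxM.
Qed.

Lemma stab_scale m (W : 'M[C]_(m, N)) M c : stablemx W M -> stablemx W (c *: M).
Proof. by move=> hM; rewrite -scalemxAr scalemx_sub. Qed.

Lemma in_stab m (W : 'M[C]_(m, N)) M (v : 'rV_N) :
  (v <= W)%MS -> stablemx W M -> (v *m M <= W)%MS.
Proof. by move=> hv hM; apply: submx_trans (submxMr M hv) hM. Qed.

Lemma q0 : q != 0.
Proof.
apply/negP => /eqP q0; move: qn; rewrite q0 expr0n.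
by case: (n) hn => // n' _ /= /eqP; rewrite eq_sym oner_eq0.
Qed.

Lemma rowsimple_cons : rowsimple xm ym zm.
Proof.
move=> m W Wx Wy Wz.
case: (eqVneq W 0) => [->|W0]; first by left; rewrite mxrank0.
right; apply/eqP; rewrite -/(row_full W) -sub1mx.
have [v vW v0] := rowV0Pn W0.
have [j vj] : exists j : 'I_N, v 0 j != 0.
  apply/existsP; apply: contraR v0 => /existsPn H; apply/eqP/rowP => l.
  by rewrite !mxE; apply/eqP; move: (H l); rewrite negbK.
have WP k : (k < n)%N -> stablemx W (Pk k).
  move=> hk; apply: (big_ind (fun M => stablemx W M)).
  - exact: stablemx0.
  - by move=> A B; apply: stablemxD.
  - by move=> i _; apply/stab_scale/stab_mpow/stablemxM.
have [k hk uk] : exists2 k, (k < n)%N & (u k <= W)%MS.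
  case: (ltnP j n) => hj.
    exists (nat_of_ord j) => //.
    have := in_stab vW (WP _ hj); rewrite Pk_E // -scalemxAr vE coord_ord scalerA.
    move/(scalemx_sub (n%:R * v 0 j)^-1); rewrite scalerA mulVf ?scale1r //.
    by rewrite mulf_neq0 // pnatr_eq0 -lt0n.
  have hk : (j - n < n)%N by rewrite ltn_subLR // addnn -mul2n.
  exists (j - n)%N => //.
  have := in_stab (in_stab vW Wx) (WP _ hk).
  rewrite -mulmxA xPk_E // -scalemxAr vE.
  rewrite [X in coord _ X](_ : _ = nat_of_ord j); last exact: subnK hj.
  rewrite coord_ord scalerA.
  move/(scalemx_sub ((q ^+ (j - n) * n%:R) * v 0 j)^-1); rewrite scalerA mulVf ?scale1r //.
  by rewrite !mulf_neq0 // ?expf_neq0 ?q0 // pnatr_eq0 -lt0n.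
have all_e a : (u ((k + a) %% n) <= W)%MS.
  elim: a => [|a IH]; first by rewrite addn0 modn_small.
  have := in_stab (in_stab IH Wy) Wz.
  rewrite uy_e ?ltmod // uz_f ?ltmod //.
  have -> : (((k + a) %% n).+1 %% n = (k + a.+1) %% n)%N.
    by rewrite -addn1 modnDml addn1 addnS.
  by [].
have all_e' i : (i < n)%N -> (u i <= W)%MS.
  move=> hi; have := all_e (i + n - k)%N.
  have -> : ((k + (i + n - k)) %% n = i)%N.
    by rewrite addnBA ?(leq_trans (ltnW hk)) ?leq_addl // addnC addnK modnDr modn_small.
  by [].
apply/row_subP => l; rewrite row1 -uE.
apply: (@split_idx (fun i => (u i <= W)%MS) _ _ l (ltn_ord l)) => i hi; first exact: all_e'.
by rewrite -uy_e //; apply: in_stab (all_e' _ hi) Wy.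
Qed.

End Cons.

Local Open Scope complex_scope.

Theorem mainTheorem14 (R : realType) (w t : R[i]) (n : nat) :
  3.-primitive_root w -> t != 0 -> n.-primitive_root (- t) ->
  PI_degree_Mt w t (2 * n).
Proof.
move=> hw t0 hq.
have hn := prim_order_gt0 hq.
split.
  exists (xm n (- t))^T, (ym _ n)^T, (zm _ n)^T; split.
    by have := row_to_rep hw (RowRel_cons hn hq); rewrite opprK.
  apply: row_to_simple; first by rewrite muln_gt0 hn.
  exact: rowsimple_cons hn hq.
move=> d X Y Z hrep hs.
have hR := rep_to_row hw hrep.
have hrs := simple_to_row hs.
have hd : (0 < d)%N by case: hs.
have := upper_row hR hrs (prim_expr_order hq) hn _ hd.
by rewrite mul2n -addnn oppr_eq0; apply.
Qed.
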